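(* Let $\mu>0$, $\Omega\subseteq\Lambda$, and $V:\Omega\to\mathbb{R}$ with $\frac12\mu\le V(x)\le\mu$ for all $x\in\Omega$. Let $\chi=\mathbb{1}[-\Delta_\Omega-V<0]$ (spectral projection on $\mathbb{C}^\Omega$) and $\rho_\chi(x)=\chi_{x,x}$. Then for every $x\in\Omega$ and every $\beta>0$, $$\rho_\chi(x)\ \ge\ e^{-\beta\mu/2}\Big[\big(e^{\beta\Delta_\Omega}\big)_{x,x}-e^{-\beta\mu/2}\Big].$$
   Context: $\Lambda=\mathbb{Z}_L^d$; $T_{x,y}=1$ if $|x-y|_1=1$, else $0$; $\Delta_{x,y}=T_{x,y}-2d\delta_{x,y}$; $\Delta_\Omega=P_\Omega\Delta P_\Omega$ regarded as an operator on $\mathbb{C}^\Omega$; $V$ acts as a diagonal multiplication operator. *)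

(* Defs.v *)
From HB Require Import structures.
From mathcomp Require Import all_boot all_order all_algebra.
From mathcomp Require Import all_classical all_reals all_analysis.
Set Implicit Arguments. Unset Strict Implicit. Unset Printing Implicit Defensive.
Import Order.TTheory GRing.Theory Num.Theory.
Local Open Scope ring_scope.

(* Sites of the discrete torus Lambda = Z_L^d. *)
Definition site (d L : nat) : finType := {ffun 'I_d -> 'I_L}.

Definition cdist (L : nat) (a b : 'I_L) : nat :=
  let m := if (a <= b)%N then (b - a)%N else (a - b)%N in minn m (L - m).

Definition l1dist (d L : nat) (x y : site d L) : nat :=
  (\sum_(k < d) cdist (x k) (y k))%N.

Section Ops.
Variables (R : realType) (d L : nat).

Definition Tmat (x y : site d L) : R := if l1dist x y == 1%N then 1 else 0.
Definition Lap (x y : site d L) : R := Tmat x y - (2 * d)%:R * (x == y)%:R.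

Definition Osite (Om : {set site d L}) (i : 'I_#|Om|) : site d L := enum_val i.

(* Delta_Omega = P_Omega Delta P_Omega as an operator on functions on Omega. *)
Definition LapOm (Om : {set site d L}) : 'M[R]_#|Om| :=
  \matrix_(i, j) Lap (Osite i) (Osite j).

Definition HOm (Om : {set site d L}) (V : site d L -> R) : 'M[R]_#|Om| :=
  - LapOm Om - diag_mx (\row_i V (Osite i)).
End Ops.

Definition spectral_decomp (R : realType) (n : nat) (A U : 'M[R]_n) (lam : 'I_n -> R) : Prop :=
  U *m U^T = 1%:M /\ A = U *m diag_mx (\row_k lam k) *m U^T.

Definition fcalc (R : realType) (n : nat) (U : 'M[R]_n) (lam : 'I_n -> R) (f : R -> R) : 'M[R]_n :=
  U *m diag_mx (\row_k f (lam k)) *m U^T.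

Definition ind_neg (R : realType) (t : R) : R := if t < 0 then 1 else 0.

(* Main.v *)
Require Import Defs.
From HB Require Import structures.
From mathcomp Require Import all_boot all_order all_algebra.
From mathcomp Require Import all_classical all_reals all_analysis.
From mathcomp Require Import ring lra zify.
Import Order.TTheory GRing.Theory Num.Theory.
Local Open Scope ring_scope.
Local Open Scope classical_set_scope.
Set Implicit Arguments. Unset Strict Implicit.

Section Aux.
Variable R : realType.

Definition mpow (n : nat) (B : 'M[R]_n) (k : nat) : 'M[R]_n := iter k (mulmx B) 1%:M.

Lemma orthC n (U : 'M[R]_n) : U *m U^T = 1%:M -> U^T *m U = 1%:M.
Proof. exact: mulmx1C. Qed.

Lemma mpow_spec n (U : 'M[R]_n) (nu : 'I_n -> R) k :
  U^T *m U = 1%:M ->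
  mpow (U *m diag_mx (\row_j nu j) *m U^T) k = U *m diag_mx (\row_j nu j ^+ k) *m U^T.
Proof.
move=> hU; elim: k => [|k IH] /=.
  have -> : diag_mx (\row_j nu j ^+ 0) = 1%:M :> 'M[R]_n.
    by apply/matrixP => i j; rewrite !mxE expr0.
  by rewrite mulmx1 (mulmx1C hU).
rewrite /mpow /= -/(mpow _ k) IH.
rewrite -!mulmxA; congr (_ *m _).
rewrite !mulmxA -[_ *m U^T *m U]mulmxA hU mulmx1 mulmx_diag.
congr (diag_mx _ *m _); apply/rowP => j; rewrite !mxE exprS //.
Qed.

Lemma fcalc_diag n (U : 'M[R]_n) (nu : 'I_n -> R) i :
  (U *m diag_mx (\row_j nu j) *m U^T) i i = \sum_k U i k * U i k * nu k.
Proof.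
rewrite mxE; apply: eq_bigr => k _; rewrite mul_mx_diag !mxE; ring.
Qed.

Lemma mpow_mono n (A B : 'M[R]_n) :
  (forall i j, 0 <= B i j <= A i j) ->
  forall k i j, 0 <= mpow B k i j <= mpow A k i j.
Proof.
move=> hAB; elim => [|k IH] i j /=.
  by rewrite !mxE lexx andbT ler0n.
rewrite !mxE; apply/andP; split.
  apply: sumr_ge0 => l _; apply: mulr_ge0; [by case/andP: (hAB i l)|by case/andP: (IH l j)].
apply: ler_sum => l _; case/andP: (hAB i l) => h1 h2; case/andP: (IH l j) => h3 h4.
exact: ler_pM.
Qed.

Lemma series_spec n (U : 'M[R]_n) (nu : 'I_n -> R) (beta : R) i :
  U^T *m U = 1%:M ->
  series (fun m => beta ^+ m / m`!%:R * mpow (U *m diag_mx (\row_j nu j) *m U^T) m i i)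
  = fun N => \sum_k U i k * U i k * series (exp_coeff (beta * nu k)) N.
Proof.
move=> hU; apply/funext => N; rewrite /series /=.
under eq_bigr => m _ do rewrite mpow_spec // fcalc_diag big_distrr.
rewrite exchange_big /=; apply: eq_bigr => k _; rewrite big_distrr /=.
apply: eq_bigr => m _; rewrite /exp_coeff /= exprMn; ring.
Qed.

Lemma series_cvg n (U : 'M[R]_n) (nu : 'I_n -> R) (beta : R) i :
  U^T *m U = 1%:M ->
  series (fun m => beta ^+ m / m`!%:R * mpow (U *m diag_mx (\row_j nu j) *m U^T) m i i)
  @ \oo --> \sum_k U i k * U i k * expR (beta * nu k).
Proof.
move=> hU; rewrite series_spec //.
apply: (cvg_big (op := +%R) (x0 := 0) (P := xpredT)) => //.
  exact: add_continuous.
move=> k _; apply: cvgMl_tmp.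
exact: is_cvg_series_exp_coeff.
Qed.

Lemma exp_compare n (U1 U2 : 'M[R]_n) (nu1 nu2 : 'I_n -> R) (beta : R) i :
  0 <= beta ->
  U1^T *m U1 = 1%:M -> U2^T *m U2 = 1%:M ->
  (forall a b, 0 <= (U2 *m diag_mx (\row_j nu2 j) *m U2^T) a b <=
               (U1 *m diag_mx (\row_j nu1 j) *m U1^T) a b) ->
  \sum_k U2 i k * U2 i k * expR (beta * nu2 k) <=
  \sum_k U1 i k * U1 i k * expR (beta * nu1 k).
Proof.
move=> hb h1 h2 hm.
pose s1 := series (fun m => beta ^+ m / m`!%:R * mpow (U1 *m diag_mx (\row_j nu1 j) *m U1^T) m i i).
pose s2 := series (fun m => beta ^+ m / m`!%:R * mpow (U2 *m diag_mx (\row_j nu2 j) *m U2^T) m i i).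
have H : (fun N => s2 N - s1 N) @ \oo --> \sum_k U2 i k * U2 i k * expR (beta * nu2 k) - \sum_k U1 i k * U1 i k * expR (beta * nu1 k).
  by apply: cvgB; [exact: series_cvg|exact: series_cvg].
rewrite -subr_le0; apply: (cvgr_to_le H).
near=> N; rewrite subr_le0 /series /=; apply: ler_sum => m _.
apply: ler_wpM2l; first by rewrite divr_ge0 ?exprn_ge0.
by case/andP: (mpow_mono hm m i i).
Unshelve. all: by end_near.
Qed.
End Aux.

Lemma cdistC L (a b : 'I_L) : cdist a b = cdist b a.
Proof. rewrite /cdist; case: (leqP a b); case: (leqP b a); lia. Qed.

Lemma cdist0 L (a b : 'I_L) : cdist a b = 0%N -> a = b.
Proof.
have ha := ltn_ord a; have hb := ltn_ord b.
rewrite /cdist => h; apply: val_inj => /=; move: h; case: (leqP a b); lia.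
Qed.

Lemma cdist1 L (a b : 'I_L) : cdist a b = 1%N -> b = ordS a \/ b = ord_pred a.
Proof.
have ha := ltn_ord a; have hb := ltn_ord b.
rewrite /cdist => h.
have : [\/ (b:nat) = a.+1, (a:nat) = 0%N /\ (b:nat) = L.-1, (b.+1 = a)%N | (a:nat) = L.-1 /\ (b:nat) = 0%N].
  move: h; case: (leqP a b) => hab h.
  - have : ((b - a)%N == 1%N) || ((L - (b - a))%N == 1%N) by apply/orP; lia.
    case/orP => /eqP h'; [apply: Or41|apply: Or42]; lia.
  - have : ((a - b)%N == 1%N) || ((L - (a - b))%N == 1%N) by apply/orP; lia.
    case/orP => /eqP h'; [apply: Or43|apply: Or44]; lia.
case=> [h1|[h1 h2]|h1|[h1 h2]].
- left; apply: val_inj => /=; rewrite h1 modn_small //; lia.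
- right; apply: val_inj => /=; rewrite h1 h2 add0n modn_small //; lia.
- right; apply: val_inj => /=.
  have -> : ((a + L).-1 = b + L)%N by lia.
  by rewrite modnDr modn_small //.
- left; apply: val_inj => /=; rewrite h1 h2.
  have -> : L.-1.+1 = L by lia.
  by rewrite modnn.
Qed.

Lemma l1distC d L (x y : site d L) : l1dist x y = l1dist y x.
Proof. by rewrite /l1dist; apply: eq_bigr => k _; rewrite cdistC. Qed.

Definition nb d L (x : site d L) (p : 'I_d * bool) : site d L :=
  [ffun j => if j == p.1 then (if p.2 then ordS (x j) else ord_pred (x j)) else x j].

Lemma l1dist1 d L (x y : site d L) : l1dist x y = 1%N -> y \in codom (nb x).
Proof.
rewrite /l1dist => h.
case: (pickP (fun k => cdist (x k) (y k) != 0%N)) => [k hk|h0]; last first.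
  by move: h; rewrite big1 // => k _; move: (h0 k) => /negbFE/eqP.
move: h; rewrite (bigD1 k) //= => h.
have {}h : (cdist (x k) (y k) + \sum_(i < d | i != k) cdist (x i) (y i))%N = 1%N by exact: h.
have hk1 : cdist (x k) (y k) = 1%N.
  move: hk; rewrite -lt0n => hk; lia.
have hr : (\sum_(i < d | i != k) cdist (x i) (y i) == 0)%N by apply/eqP; lia.
move: hr; rewrite sum_nat_eq0 => /forallP hr.
apply/codomP.
case: (cdist1 hk1) => hy.
- exists (k, true); apply/ffunP => j; rewrite ffunE /=.
  case: eqP => [->|/eqP hjk] //; apply/esym/cdist0; move: (hr j); rewrite hjk /= => /eqP //.
- exists (k, false); apply/ffunP => j; rewrite ffunE /=.
  case: eqP => [->|/eqP hjk] //; apply/esym/cdist0; move: (hr j); rewrite hjk /= => /eqP //.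
Qed.

Lemma nbr_count d L (x : site d L) : (#|[pred y | l1dist x y == 1%N]| <= 2 * d)%N.
Proof.
apply: (@leq_trans #|[pred y in codom (nb x)]|).
  apply: subset_leq_card; apply/fintype.subsetP => y; rewrite inE => /eqP; exact: l1dist1.
apply: (leq_trans (card_size (codom (nb x)))); rewrite size_codom card_prod card_ord card_bool.
by rewrite mulnC.
Qed.

Lemma Tmat_rowsum (R : realType) d L (x : site d L) : \sum_y Tmat R x y <= (2 * d)%:R.
Proof.
have -> : \sum_y Tmat R x y = (#|[pred y | l1dist x y == 1%N]|)%:R.
  rewrite /Tmat -big_mkcond /= sumr_const; by [].
by rewrite ler_nat nbr_count.
Qed.

Section Quad.
Variable R : realType.

Lemma sum_delta n (F : 'I_n -> R) i : \sum_j F j * (i == j)%:R = F i.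
Proof.
rewrite (bigD1 i) //= eqxx mulr1 big1 ?addr0 // => j hj.
by rewrite eq_sym (negbTE hj) mulr0.
Qed.

Lemma Osite_eq d L (Om : {set site d L}) (i j : 'I_#|Om|) : (Osite i == Osite j) = (i == j).
Proof. by rewrite /Osite (inj_eq enum_val_inj). Qed.

Lemma Tmat_ge0 d L (x y : site d L) : 0 <= Tmat R x y.
Proof. by rewrite /Tmat; case: ifP. Qed.

Lemma TmatC d L (x y : site d L) : Tmat R x y = Tmat R y x.
Proof. by rewrite /Tmat l1distC. Qed.

Lemma HOm_entry d L (Om : {set site d L}) (V : site d L -> R) i j :
  HOm Om V i j = - Tmat R (Osite i) (Osite j) + ((2 * d)%:R - V (Osite i)) * (i == j)%:R.
Proof.
rewrite /HOm /LapOm /Lap !mxE Osite_eq; case: eqP => [->|_] /=; rewrite ?mulr1n ?mulr0n; ring.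
Qed.

Lemma LapOm_entry d L (Om : {set site d L}) i j :
  LapOm R Om i j = Tmat R (Osite i) (Osite j) - (2 * d)%:R * (i == j)%:R.
Proof. by rewrite /LapOm /Lap !mxE Osite_eq. Qed.

Lemma rowsumOm d L (Om : {set site d L}) (x : site d L) :
  \sum_(j < #|Om|) Tmat R x (Osite j) <= (2 * d)%:R.
Proof.
apply: le_trans (Tmat_rowsum R x).
rewrite /Osite -(big_enum_val (A := mem Om) (fun y => Tmat R x y)) /=.
rewrite [X in _ <= X](bigID (mem Om)) /= lerDl.
by apply: sumr_ge0 => y _; apply: Tmat_ge0.
Qed.

Lemma quad d L (Om : {set site d L}) (u : 'I_#|Om| -> R) :
  \sum_i \sum_j u i * Tmat R (Osite i) (Osite j) * u j <= (2 * d)%:R * \sum_i u i ^+ 2.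
Proof.
pose T (i j : 'I_#|Om|) := Tmat R (Osite i) (Osite j).
have h1 : \sum_i \sum_j u i * Tmat R (Osite i) (Osite j) * u j <= \sum_i \sum_j (T i j * u i ^+ 2 / 2 + T i j * u j ^+ 2 / 2).
  apply: ler_sum => i _; apply: ler_sum => j _.
  rewrite -subr_ge0.
  have -> : T i j * u i ^+ 2 / 2 + T i j * u j ^+ 2 / 2 - u i * Tmat R (Osite i) (Osite j) * u j
            = T i j * (u i - u j) ^+ 2 / 2 by rewrite /T; field.
  rewrite /T. apply: divr_ge0; last by []. apply: mulr_ge0; [exact: Tmat_ge0|exact: sqr_ge0].
apply: (le_trans h1).
have hA : \sum_i \sum_j T i j * u j ^+ 2 / 2 = \sum_i \sum_j T i j * u i ^+ 2 / 2.
  rewrite exchange_big /=; apply: eq_bigr => i _; apply: eq_bigr => j _.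
  by rewrite /T TmatC.
under eq_bigr do rewrite big_split /=.
rewrite big_split /= hA.
have -> : \sum_i \sum_j T i j * u i ^+ 2 / 2 = (\sum_i u i ^+ 2 * \sum_j T i j) / 2.
  rewrite mulr_suml; apply: eq_bigr => i _; rewrite mulr_sumr mulr_suml.
  by apply: eq_bigr => j _; ring.
have : \sum_i u i ^+ 2 * \sum_j T i j <= (2 * d)%:R * \sum_i u i ^+ 2.
  rewrite mulr_sumr; apply: ler_sum => i _; rewrite mulrC.
  by apply: ler_wpM2r; [exact: sqr_ge0|exact: rowsumOm].
lra.
Qed.

Lemma lam_lb d L (Om : {set site d L}) (V : site d L -> R) (mu : R)
  (U : 'M[R]_#|Om|) (lam : 'I_#|Om| -> R) :
  (forall x, x \in Om -> V x <= mu) ->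
  spectral_decomp (HOm Om V) U lam -> forall k, - mu <= lam k.
Proof.
move=> hV [hU hH] k.
have hU' := mulmx1C hU.
have hD : U^T *m HOm Om V *m U = diag_mx (\row_j lam j).
  by rewrite hH !mulmxA hU' mul1mx -mulmxA hU' mulmx1.
have -> : lam k = (U^T *m HOm Om V *m U) k k by rewrite hD !mxE eqxx mulr1n.
pose u i := U i k.
have hu : \sum_i u i ^+ 2 = 1.
  have := congr1 (fun M : 'M[R]_#|Om| => M k k) hU'; rewrite /= !mxE eqxx mulr1n => <-.
  by apply: eq_bigr => i _; rewrite mxE /u expr2.
have -> : (U^T *m HOm Om V *m U) k k = \sum_i \sum_j u i * HOm Om V i j * u j.
  rewrite mxE exchange_big /=; apply: eq_bigr => i _; rewrite mxE mulr_suml.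
  by apply: eq_bigr => j _; rewrite !mxE.
have -> : \sum_i \sum_j u i * HOm Om V i j * u j =
   \sum_i (((2 * d)%:R - V (Osite i)) * u i ^+ 2) -
   \sum_i \sum_j u i * Tmat R (Osite i) (Osite j) * u j.
  rewrite -sumrB; apply: eq_bigr => i _.
  have -> : \sum_j u i * HOm Om V i j * u j =
     \sum_j (- (u i * Tmat R (Osite i) (Osite j) * u j) +
             (u i * ((2 * d)%:R - V (Osite i)) * u j) * (i == j)%:R).
    by apply: eq_bigr => j _; rewrite HOm_entry; ring.
  by rewrite big_split /= sum_delta sumrN; ring.
have hq := quad (Om := Om) u.
have hv : \sum_i V (Osite i) * u i ^+ 2 <= mu * \sum_i u i ^+ 2.
  rewrite mulr_sumr; apply: ler_sum => i _; apply: ler_wpM2r; first exact: sqr_ge0.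
  by apply: hV; rewrite /Osite; exact: enum_valP.
have -> : \sum_i ((2 * d)%:R - V (Osite i)) * u i ^+ 2 =
          (2 * d)%:R * \sum_i u i ^+ 2 - \sum_i V (Osite i) * u i ^+ 2.
  by rewrite mulr_sumr -sumrB; apply: eq_bigr => i _; ring.
move: hq hv; rewrite hu; lra.
Qed.

Lemma ind_bound (beta mu t : R) : 0 <= beta -> - mu <= t ->
  expR (- (beta * mu)) * (expR (- (beta * t)) - 1) <= ind_neg t.
Proof.
move=> hb ht; rewrite /ind_neg; case: ifP => ht0.
- rewrite mulrBr mulr1 -expRD.
  have : expR (- (beta * mu) + - (beta * t)) <= 1.
    rewrite expR_le1; have : 0 <= beta * (mu + t) by apply: mulr_ge0 => //; lra.
    lra.
  have := expR_gt0 (- (beta * mu)); lra.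
- have : expR (- (beta * t)) <= 1.
    rewrite expR_le1; have : 0 <= beta * t by apply: mulr_ge0 => //; move/negbT: ht0; rewrite -leNgt.
    lra.
  have := expR_gt0 (- (beta * mu)) => h1 h2.
  rewrite -subr_le0 in h2; rewrite mulr_ge0_le0 //; exact: ltW.
Qed.
End Quad.

Theorem mainTheorem8 (R : realType) (d L : nat) (mu : R)
  (Om : {set site d L}) (V : site d L -> R)
  (hmu : 0 < mu)
  (hV : forall x, x \in Om -> mu / 2 <= V x <= mu)
  (U1 : 'M[R]_#|Om|) (lam1 : 'I_#|Om| -> R)
  (h1 : spectral_decomp (HOm Om V) U1 lam1)
  (U2 : 'M[R]_#|Om|) (lam2 : 'I_#|Om| -> R)
  (h2 : spectral_decomp (LapOm R Om) U2 lam2) :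
  forall (i : 'I_#|Om|) (beta : R), 0 < beta ->
    let chi := fcalc U1 lam1 (@ind_neg R) in
    let eDelta := fcalc U2 lam2 (fun t => expR (beta * t)) in
    expR (- (beta * mu / 2)) * (eDelta i i - expR (- (beta * mu / 2))) <= chi i i.
Proof.
move=> i beta hb /=.
have hlam := lam_lb (mu := mu) (fun x hx => proj2 (andP (hV x hx))) h1.
case: h1 => hU1 hH1; case: h2 => hU2 hL2.
have hU1' := mulmx1C hU1; have hU2' := mulmx1C hU2.
pose c : R := (2 * d)%:R.
have diagB (lam : 'I_#|Om| -> R) (a b : R) :
    diag_mx (\row_j (a * lam j + b)) = a *: diag_mx (\row_j lam j) + b%:M.
  by apply/matrixP => p q; rewrite !mxE; case: eqP => [->|_] /=; rewrite ?mulr1n ?mulr0n; ring.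
have conjB (U : 'M[R]_#|Om|) (D : 'M[R]_#|Om|) (a b : R) : U *m U^T = 1%:M ->
    U *m (a *: D + b%:M) *m U^T = a *: (U *m D *m U^T) + b%:M.
  move=> hU; rewrite mulmxDr mulmxDl -scalemxAr -scalemxAl mul_mx_scalar -scalemxAl hU.
  by rewrite scalemx1.
have B1E : U1 *m diag_mx (\row_j ((-1) * lam1 j + c)) *m U1^T = - HOm Om V + c%:M.
  by rewrite diagB conjB // -hH1 scaleN1r.
have B2E : U2 *m diag_mx (\row_j (1 * lam2 j + (mu / 2 + c))) *m U2^T = LapOm R Om + (mu / 2 + c)%:M.
  by rewrite diagB conjB // -hL2 scale1r.
have hcmp := @exp_compare R _ U1 U2 (fun j => (-1) * lam1 j + c)
               (fun j => 1 * lam2 j + (mu / 2 + c)) beta i (ltW hb) hU1' hU2'.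
rewrite B1E B2E in hcmp.
have hm : forall a b : 'I_#|Om|, 0 <= (LapOm R Om + (mu / 2 + c)%:M) a b <= (- HOm Om V + c%:M) a b.
  move=> a b; rewrite !mxE /Lap Osite_eq.
  have hT := Tmat_ge0 R (Osite a) (Osite b).
  have hVa := hV (Osite a) (enum_valP a).
  case/andP: hVa => hVa1 hVa2.
  have hT2 := Tmat_ge0 R (Osite a) (Osite a).
  rewrite /c; case: eqP => [<-|_] /=; rewrite ?mulr1n ?mulr0n ?mulr1 ?mulr0; apply/andP; split; lra.
have {hm}hcmp := hcmp hm.
set eD := fcalc U2 lam2 (fun t : R => expR (beta * t)) i i.
set S := \sum_k U1 i k * U1 i k * expR (- (beta * lam1 k)).
have e2 : \sum_k U2 i k * U2 i k * expR (beta * (1 * lam2 k + (mu / 2 + c)))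
          = expR (beta * c) * (expR (beta * mu / 2) * eD).
  rewrite /eD /fcalc fcalc_diag !mulr_sumr; apply: eq_bigr => k _.
  have -> : beta * (1 * lam2 k + (mu / 2 + c)) = beta * lam2 k + (beta * mu / 2 + beta * c) by field.
  rewrite !expRD; ring.
have e1 : \sum_k U1 i k * U1 i k * expR (beta * (-1 * lam1 k + c)) = expR (beta * c) * S.
  rewrite /S !mulr_sumr; apply: eq_bigr => k _.
  have -> : beta * (-1 * lam1 k + c) = - (beta * lam1 k) + beta * c by ring.
  rewrite !expRD; ring.
rewrite e1 e2 ler_pM2l ?expR_gt0 // in hcmp.
have hw : \sum_k U1 i k * U1 i k = 1.
  have := congr1 (fun M : 'M[R]_#|Om| => M i i) hU1; rewrite /= !mxE eqxx mulr1n => <-.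
  by apply: eq_bigr => k _; rewrite mxE.
have hchi : expR (- (beta * mu)) * (S - 1) <= fcalc U1 lam1 (@ind_neg R) i i.
  rewrite /fcalc fcalc_diag -hw /S -sumrB mulr_sumr; apply: ler_sum => k _.
  have -> : expR (- (beta * mu)) * (U1 i k * U1 i k * expR (- (beta * lam1 k)) - U1 i k * U1 i k)
     = U1 i k * U1 i k * (expR (- (beta * mu)) * (expR (- (beta * lam1 k)) - 1)) by ring.
  apply: ler_wpM2l; first by rewrite -expr2 sqr_ge0.
  exact: ind_bound (ltW hb) (hlam k).
set a := expR (- (beta * mu / 2)).
have hab : a * expR (beta * mu / 2) = 1 by rewrite /a expRN mulVf // gt_eqF // expR_gt0.
have haa : expR (- (beta * mu)) = a * a.
  by rewrite /a -expRD; congr expR; field.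
rewrite haa in hchi.
have ha : 0 <= a * a by rewrite -expr2 sqr_ge0.
have h3 : a * a * (expR (beta * mu / 2) * eD) <= a * a * S by apply: ler_wpM2l.
have h4 : a * a * (expR (beta * mu / 2) * eD) = a * eD.
  by rewrite mulrA -(mulrA a a) hab mulr1.
move: hchi h3 h4; set X := fcalc _ _ _ i i; nra.
Qed.
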